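(* Let $q$ be a prime power with $q\equiv 1\pmod{52}$. Fix a primitive root $\alpha$ of $\mathbb{F}_q$ and set $\beta=\alpha^{(q-1)/13}$. Let $\chi$ be the quadratic residue character of $\mathbb{F}_q$. The following statements are equivalent: (i) $(q,13)$ gives a $3$-design; (ii) $(q,26)$ gives a $3$-design; (iii) the sequence $(\chi(1-\beta),\chi(1-\beta^2),\dots,\chi(1-\beta^6))$ is one of $\pm(1,1,-1,1,-1,-1)$, $\pm(1,1,-1,-1,-1,1)$, $\pm(1,-1,1,1,-1,-1)$, $\pm(1,-1,1,-1,-1,1)$.
   Context: Let $q$ be a power of an odd prime. The group $\mathrm{PSL}(2,q)$ acts on the projective line $\mathrm{PG}(1,q)=\mathbb{F}_q\cup\{\infty\}$ by linear fractional transformations $z\mapsto (az+b)/(cz+d)$, where $a,b,c,d\in\mathbb{F}_q$ with $ad-bc$ a nonzero square (matrices taken modulo $\pm I$). A $k$-subset $B$ of $\mathrm{PG}(1,q)$ is a starter of a $3$-design if the orbit $\{gB: g\in\mathrm{PSL}(2,q)\}$ is the block set of a $3$-$(q+1,k,\lambda)$ design for some positive integer $\lambda$. For $q\equiv1\pmod 4$ and a divisor $k$ of $q-1$, let $B$ be the unique subgroup of order $k$ of $\mathbb{F}_q^\times$; we say $(q,k)$ gives a $3$-design if $B$ is a starter of a $3$-design under $\mathrm{PSL}(2,q)$. The quadratic residue character $\chi:\mathbb{F}_q^\times\to\{\pm1\}$ is $\chi(a)=1$ if $a$ is a nonzero square and $\chi(a)=-1$ otherwise. *)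

(* Defs.v *)
From HB Require Import structures.
From mathcomp Require Import all_boot all_order all_algebra all_field.
Set Implicit Arguments. Unset Strict Implicit. Unset Printing Implicit Defensive.
Import GRing.Theory.
Local Open Scope ring_scope.

(* Projective line PG(1,q) over a finite field F: [option F], None = infinity. *)
Definition PG1 (F : finFieldType) := option F.

Definition nzsq (F : finFieldType) (x : F) : bool :=
  (x != 0) && [exists y : F, y ^+ 2 == x].

(* Quadratic residue character (with value -1 on non-squares; meant for x != 0). *)
Definition chi (F : finFieldType) (x : F) : int := if nzsq x then 1 else -1.

Definition mobius (F : finFieldType) (g : F * F * F * F) (z : option F) : option F :=
  let: (a, b, c, d) := g in
  match z with
  | Some x => if c * x + d == 0 then None else Some ((a * x + b) / (c * x + d))
  | None => if c == 0 then None else Some (a / c)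
  end.

Definition mdet (F : finFieldType) (g : F * F * F * F) : F :=
  let: (a, b, c, d) := g in a * d - b * c.

(* Elements of PSL(2,q), represented by matrices with ad - bc a nonzero square
   (the action factors through the quotient by +-I). *)
Definition PSL2 (F : finFieldType) : {set F * F * F * F} :=
  [set g | nzsq (mdet g)].

Definition psl_orbit (F : finFieldType) (B : {set option F}) : {set {set option F}} :=
  [set (mobius g) @: B | g in PSL2 F].

(* B is a starter of a 3-design: its orbit is the block set of a
   3-(q+1,|B|,lambda) design for some positive integer lambda. *)
Definition starter3 (F : finFieldType) (B : {set option F}) : Prop :=
  exists lambda : nat, (0 < lambda)%N /\
    forall T : {set option F}, #|T| = 3%N ->
      #|[set X in psl_orbit B | T \subset X]| = lambda.

Definition mu_sub (F : finFieldType) (k : nat) : {set option F} :=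
  [set Some x | x in [set x : F | (x != 0) && (x ^+ k == 1)]].

Definition gives_3design (F : finFieldType) (k : nat) : Prop :=
  starter3 (mu_sub F k).

(* Main.v *)
Require Import Defs.
From HB Require Import structures.
From mathcomp Require Import all_boot all_order all_algebra all_field.
From mathcomp Require Import ring zify.
Import GRing.Theory.
Set Implicit Arguments. Unset Strict Implicit. Unset Printing Implicit Defensive.

Definition Sg (bs : seq bool) (d : nat) : bool := nth false bs ((if d <= 6 then d else 13 - d).-1).
Definition PAT (bs : seq bool) (c2 : bool) (e d : nat) : bool :=
  if ~~ odd e then Sg bs d else if d == 0 then c2 else (Sg bs ((2 * d) %% 13) == Sg bs d).
Definition sumI (n : nat) (f : nat -> nat) : nat := foldr (fun i acc => f i + acc) 0 (iota 0 n).

Definition sgnI bs c2 (i j : nat) : bool :=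
  PAT bs c2 (i %/ 13 + j %/ 13) ((j %% 13 + 13 - i %% 13) %% 13).
Definition tauI bs c2 (a b c : nat) : bool :=
  sgnI bs c2 a b == (sgnI bs c2 b c == sgnI bs c2 a c).

Definition cnt n bs c2 : nat :=
  sumI n (fun a => sumI n (fun b => sumI n (fun c =>
    [&& a != b, b != c, a != c & tauI bs c2 a b c] : nat))).


Definition tbl n bs c2 : seq (seq (option bool)) :=
  mkseq (fun i => mkseq (fun j => if i == j then None else Some (sgnI bs c2 i j)) n) n.

Definition ev3 (x y z : option bool) : nat :=
  match x, y, z with Some u, Some v, Some w => (u == (v == w)) : nat | _, _, _ => 0 end.

Definition sumL (X : Type) (s : seq X) (h : X -> nat) : nat := foldr (fun x acc => h x + acc) 0 s.

Definition inner2 (rb ra : seq (option bool)) (sab : option bool) : nat :=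
  sumL (zip rb ra) (fun yz => ev3 sab yz.1 yz.2).
Definition inner1 (T : seq (seq (option bool))) (ra : seq (option bool)) : nat :=
  sumL (zip T ra) (fun rbs => inner2 rbs.1 ra rbs.2).
Definition cnt3 (T : seq (seq (option bool))) : nat := sumL T (inner1 T).

Lemma sumL_map (X Y : Type) (f : X -> Y) (s : seq X) h : sumL (map f s) h = sumL s (fun x => h (f x)).
Proof. by rewrite /sumL foldr_map. Qed.

Lemma zip_map2 (X Y : Type) (f : nat -> X) (g : nat -> Y) (s : seq nat) :
  zip (map f s) (map g s) = map (fun i => (f i, g i)) s.
Proof. by elim: s => //= x s ->. Qed.

Lemma sumL_ext (s : seq nat) h1 h2 : (forall i, i \in s -> h1 i = h2 i) -> sumL s h1 = sumL s h2.
Proof.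
elim: s => //= x s IH H; rewrite /sumL /= H ?mem_head //; congr addn.
by apply: IH => i iS; apply: H; rewrite inE iS orbT.
Qed.

Lemma cnt3_mkseq n (E : nat -> nat -> option bool) :
  cnt3 (mkseq (fun i => mkseq (E i) n) n) =
  sumL (iota 0 n) (fun a => sumL (iota 0 n) (fun b => sumL (iota 0 n) (fun c => ev3 (E a b) (E b c) (E a c)))).
Proof.
rewrite /cnt3 /mkseq sumL_map; apply: sumL_ext => a _.
rewrite /inner1 zip_map2 sumL_map; apply: sumL_ext => b _.
by rewrite /inner2 /= zip_map2 sumL_map.
Qed.

Definition cntT n bs c2 := cnt3 (tbl n bs c2).

Definition cntD n : nat :=
  sumI n (fun a => sumI n (fun b => sumI n (fun c => [&& a != b, b != c & a != c] : nat))).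

Lemma cntD13 : cntD 13 = 1716.
Proof. by vm_compute. Qed.

Lemma cntD26 : cntD 26 = 15600.
Proof. by vm_compute. Qed.

Definition LIST : seq (seq bool) :=
  [:: [:: true; true; false; true; false; false]; [:: false; false; true; false; true; true];
      [:: true; true; false; false; false; true]; [:: false; false; true; true; true; false];
      [:: true; false; true; true; false; false]; [:: false; true; false; false; true; true];
      [:: true; false; true; false; false; true]; [:: false; true; false; true; true; false]].

Definition Pchk (bs : seq bool) (c2 : bool) : bool :=
  let k13 := cntT 13 bs c2 in let k26 := cntT 26 bs c2 in
  ((2 * k13 == 1716) == (2 * k26 == 15600)) && ((2 * k26 == 15600) == (bs \in LIST)).

Lemma check (b1 b2 b3 b4 b5 b6 c2 : bool) : Pchk [:: b1; b2; b3; b4; b5; b6] c2.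
Proof. by move: b1 b2 b3 b4 b5 b6 c2; do 7 case; vm_compute. Qed.


Local Open Scope ring_scope.

Section Proj.
Variable F : finFieldType.
Implicit Types (g h : F * F * F * F) (w : F * F) (p : option F).

Definition rep p : F * F := if p is Some x then (x, 1) else (1, 0).
Definition proj w : option F := if w.2 == 0 then None else Some (w.1 / w.2).
Definition app g w : F * F := let: (a, b, c, d) := g in (a * w.1 + b * w.2, c * w.1 + d * w.2).
Definition mmul g h : F * F * F * F :=
  let: (a, b, c, d) := g in let: (a', b', c', d') := h in
  (a * a' + b * c', a * b' + b * d', c * a' + d * c', c * b' + d * d').
Definition adj g : F * F * F * F := let: (a, b, c, d) := g in (d, - b, - c, a).
Definition sc (l : F) w : F * F := (l * w.1, l * w.2).
Definition DD w w' : F := w.1 * w'.2 - w.2 * w'.1.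

Lemma mob_proj g w : w != (0, 0) -> mobius g (proj w) = proj (app g w).
Proof.
case: g => [[[a b] c] d]; case: w => u v /= nz; rewrite /proj /=.
case: (eqVneq v 0) => [v0|v0].
  subst v; have u0 : u != 0 by apply: contraNneq nz => ->.
  rewrite !mulr0 !addr0 mulf_eq0 (negbTE u0) orbF.
  case: ifP => // c0; congr Some; field; apply/andP; split => //; exact/negbT.
have E : c * (u / v) + d = (c * u + d * v) / v by field.
rewrite E mulf_eq0 invr_eq0 (negbTE v0) orbF.
case: ifP => // H; congr Some; field; apply/andP; split => //; exact/negbT.
Qed.

Lemma one0 : ((1 : F) == 0) = false. Proof. exact: negbTE (oner_neq0 F). Qed.

Lemma rep_nz p : rep p != (0, 0).
Proof. by case: p => [x|]; rewrite /= xpair_eqE ?one0 ?andbF. Qed.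

Lemma proj_rep p : proj (rep p) = p.
Proof. by case: p => [x|] //=; rewrite /proj /= ?one0 ?eqxx ?divr1. Qed.

Lemma proj_sc l w : l != 0 -> proj (sc l w) = proj w.
Proof.
case: w => u v l0; rewrite /proj /= mulf_eq0 (negbTE l0) /=.
case: ifP => // v0; congr Some; field; apply/andP; split => //; exact/negbT.
Qed.

Lemma rep_proj w : w != (0, 0) -> exists2 l, l != 0 & rep (proj w) = sc l w.
Proof.
case: w => u v nz; rewrite /proj /=; case: (eqVneq v 0) => [v0|v0] /=.
  subst v; have u0 : u != 0 by apply: contraNneq nz => ->.
  exists u^-1; first by rewrite invr_eq0.
  by rewrite /sc /= mulr0 mulVf.
exists v^-1; first by rewrite invr_eq0.
by rewrite /sc /= mulVf // mulrC.
Qed.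

Lemma app_mul g h w : app (mmul g h) w = app g (app h w).
Proof.
case: g => [[[a b] c] d]; case: h => [[[a' b'] c'] d']; case: w => u v /=.
congr pair; ring.
Qed.

Lemma app_sc g l w : app g (sc l w) = sc l (app g w).
Proof. case: g => [[[a b] c] d]; case: w => u v /=; rewrite /sc /=; congr pair; ring. Qed.

Lemma sc_sc l l' w : sc l (sc l' w) = sc (l * l') w.
Proof. by case: w => u v; rewrite /sc /= !mulrA. Qed.

Lemma mdet_mul g h : mdet (mmul g h) = mdet g * mdet h.
Proof. case: g => [[[a b] c] d]; case: h => [[[a' b'] c'] d'] /=; ring. Qed.

Lemma mdet_adj g : mdet (adj g) = mdet g.
Proof. case: g => [[[a b] c] d] /=; ring. Qed.

Lemma mmul_adj g : mmul (adj g) g = (mdet g, 0, 0, mdet g).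
Proof. case: g => [[[a b] c] d] /=; congr (_, _, _, _); ring. Qed.

Lemma app_scal l w : app (l, 0, 0, l) w = sc l w.
Proof. case: w => u v; rewrite /sc /=; congr pair; ring. Qed.

Lemma DD_app g w w' : DD (app g w) (app g w') = mdet g * DD w w'.
Proof. case: g => [[[a b] c] d]; case: w => u v; case: w' => u' v'; rewrite /DD /=; ring. Qed.

Lemma DD_sc l l' w w' : DD (sc l w) (sc l' w') = l * l' * DD w w'.
Proof. case: w => u v; case: w' => u' v'; rewrite /DD /sc /=; ring. Qed.

Lemma nz_app g w : mdet g != 0 -> w != (0, 0) -> app g w != (0, 0).
Proof.
move=> d0 nz; apply/eqP => E.
have : app (adj g) (app g w) = (0, 0).
  by rewrite E; case: (adj g) => [[[a b] c] d] /=; rewrite !mulr0 addr0.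
clear E; rewrite -app_mul mmul_adj app_scal; case: w nz => u v nz [].
move/eqP; rewrite mulf_eq0 (negbTE d0) /= => /eqP u0.
move/eqP; rewrite mulf_eq0 (negbTE d0) /= => /eqP v0.
by move: nz; rewrite u0 v0 eqxx.
Qed.

Lemma mobE g p : mobius g p = proj (app g (rep p)).
Proof. by rewrite -{1}(proj_rep p) mob_proj // rep_nz. Qed.

Lemma mobius_comp g h p : mdet h != 0 ->
  mobius (mmul g h) p = mobius g (mobius h p).
Proof.
move=> dh; rewrite [mobius h p]mobE mob_proj; last exact: nz_app dh (rep_nz _).
by rewrite mobE app_mul.
Qed.

Lemma mobius_scal l p : l != 0 -> mobius (l, 0, 0, l) p = p.
Proof. by move=> l0; rewrite mobE app_scal proj_sc // proj_rep. Qed.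

Lemma mobius_inj g : mdet g != 0 -> injective (mobius g).
Proof.
move=> d0; have K : cancel (mobius g) (mobius (adj g)).
  by move=> p; rewrite -mobius_comp // mmul_adj mobius_scal.
exact: can_inj K.
Qed.

Lemma DD_rep_neq p p' : p != p' -> DD (rep p) (rep p') != 0.
Proof.
case: p => [x|]; case: p' => [y|] //=; rewrite /DD /= ?mulr1 ?mul1r ?mulr0 ?mul0r ?sub0r ?subr0.
- by move=> H; rewrite subr_eq0; apply: contraNneq H => ->.
- by rewrite oppr_eq0 oner_eq0.
- by rewrite oner_eq0.
Qed.

Lemma mobius_rep g p : mdet g != 0 ->
  exists2 l, l != 0 & rep (mobius g p) = sc l (app g (rep p)).
Proof. by move=> d0; rewrite mobE; apply: rep_proj; apply: nz_app d0 (rep_nz _). Qed.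

End Proj.

Section Sq.
Variable F : finFieldType.
Hypothesis nzsqM : forall x y : F, x != 0 -> y != 0 -> nzsq (x * y) = (nzsq x == nzsq y).
Implicit Types (g h : F * F * F * F) (p : option F * option F * option F).

Definition Delta p := let: (a, b, c) := p in
  DD (rep a) (rep b) * DD (rep b) (rep c) * DD (rep c) (rep a).
Definition distinct p := let: (a, b, c) := p in [&& a != b, b != c & a != c].
Definition tau p := nzsq (Delta p).
Definition gmap g p := let: (a, b, c) := p in (mobius g a, mobius g b, mobius g c).

Lemma DDn (x y : option F) : x != y -> DD (rep x) (rep y) != 0.
Proof. exact: DD_rep_neq. Qed.

Lemma Delta_nz p : distinct p -> Delta p != 0.
Proof.
case: p => [[a b] c] /and3P [ab bc ac] /=.
by rewrite !mulf_neq0 // DDn // eq_sym.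
Qed.

Lemma nzsq_sqr (a : F) : a != 0 -> nzsq (a ^+ 2).
Proof. by move=> a0; rewrite /nzsq expf_neq0 //=; apply/existsP; exists a. Qed.

Lemma nzsq_sqrM (a y : F) : a != 0 -> y != 0 -> nzsq (a ^+ 2 * y) = nzsq y.
Proof. by move=> a0 y0; rewrite nzsqM ?expf_neq0 // nzsq_sqr //; case: (nzsq y). Qed.

Lemma Delta_g g p : mdet g != 0 ->
  exists2 l, l != 0 & Delta (gmap g p) = l ^+ 2 * (mdet g ^+ 2 * (mdet g * Delta p)).
Proof.
case: p => [[a b] c] d0 /=.
case: (mobius_rep a d0) => l1 l10 ->; case: (mobius_rep b d0) => l2 l20 ->.
case: (mobius_rep c d0) => l3 l30 ->.
exists (l1 * l2 * l3); first by rewrite !mulf_neq0.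
rewrite !DD_sc !DD_app; ring.
Qed.

Lemma tau_g g p : mdet g != 0 -> distinct p -> tau (gmap g p) = (nzsq (mdet g) == tau p).
Proof.
move=> d0 dp; rewrite /tau; case: (Delta_g p d0) => l l0 ->.
have D0 := Delta_nz dp.
rewrite nzsq_sqrM // ?mulf_neq0 ?expf_neq0 // nzsq_sqrM ?mulf_neq0 //.
by rewrite nzsqM.
Qed.

Lemma distinct_g g p : mdet g != 0 -> distinct (gmap g p) = distinct p.
Proof. by case: p => [[a b] c] d0 /=; rewrite !(inj_eq (mobius_inj d0)). Qed.

Definition Nmat p : F * F * F * F := let: (a, b, c) := p in
  let w1 := rep a in let w2 := rep b in let w3 := rep c in
  (DD w3 w2 * w1.1, DD w1 w3 * w2.1, DD w3 w2 * w1.2, DD w1 w3 * w2.2).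

Lemma mdet_N p : mdet (Nmat p) = Delta p.
Proof.
case: p => [[a b] c] /=; move: (rep a) (rep b) (rep c) => [u1 v1] [u2 v2] [u3 v3].
rewrite /DD /=; ring.
Qed.

Lemma Napp (a b c : option F) :
  [/\ app (Nmat (a, b, c)) (1, 0) = sc (DD (rep c) (rep b)) (rep a),
      app (Nmat (a, b, c)) (0, 1) = sc (DD (rep a) (rep c)) (rep b) &
      app (Nmat (a, b, c)) (1, 1) = sc (DD (rep a) (rep b)) (rep c)].
Proof.
rewrite /Nmat; move: (rep a) (rep b) (rep c) => [u1 v1] [u2 v2] [u3 v3].
by rewrite /DD /sc /=; split; congr pair; ring.
Qed.

Lemma Nadj (a b c : option F) :
  [/\ app (adj (Nmat (a, b, c))) (rep a) = sc (DD (rep a) (rep c) * DD (rep a) (rep b)) (1, 0),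
      app (adj (Nmat (a, b, c))) (rep b) = sc (DD (rep c) (rep b) * DD (rep a) (rep b)) (0, 1) &
      app (adj (Nmat (a, b, c))) (rep c) = sc (DD (rep a) (rep c) * DD (rep c) (rep b)) (1, 1)].
Proof.
rewrite /Nmat; move: (rep a) (rep b) (rep c) => [u1 v1] [u2 v2] [u3 v3].
by rewrite /DD /sc /=; split; congr pair; ring.
Qed.

Lemma trans3 p p' : distinct p -> distinct p' -> tau p = tau p' ->
  exists2 g, g \in PSL2 F & gmap g p = p'.
Proof.
move=> dp dp' tp; exists (mmul (Nmat p') (adj (Nmat p))).
  rewrite inE mdet_mul mdet_adj !mdet_N nzsqM ?Delta_nz //.
  by rewrite /tau in tp; rewrite tp.
case: p dp {tp} => [[a b] c] /and3P [ab bc ac].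
case: p' dp' => [[a' b'] c'] /and3P [ab' bc' ac'].
rewrite /gmap !mobE !app_mul.
case: (Nadj a b c) => -> -> ->.
case: (Napp a' b' c') => E1 E2 E3.
rewrite !app_sc E1 E2 E3 !sc_sc !proj_sc ?proj_rep //.
all: by rewrite !mulf_neq0 // DDn // eq_sym.
Qed.

End Sq.

Section Orb.
Variable F : finFieldType.
Hypothesis nzsqM : forall x y : F, x != 0 -> y != 0 -> nzsq (x * y) = (nzsq x == nzsq y).
Variable n0 : F.
Hypothesis n00 : n0 != 0.
Hypothesis n0ns : ~~ nzsq n0.
Variable B : {set option F}.
Implicit Types (g h : F * F * F * F) (p : option F * option F * option F).

Local Notation O := (psl_orbit B).
Definition inT p (X : {set option F}) := let: (a, b, c) := p in [&& a \in X, b \in X & c \in X].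
Definition Lam p := #|[set X in O | inT p X]|.
Definition Sset b := [set p : option F * option F * option F | distinct p && (tau p == b)].
Definition mcount b X := #|[set p in Sset b | inT p X]|.

Lemma PSL_det g : g \in PSL2 F -> mdet g != 0.
Proof. by rewrite inE => /andP []. Qed.

Lemma PSL_mul g h : g \in PSL2 F -> h \in PSL2 F -> mmul g h \in PSL2 F.
Proof.
move=> gP hP; rewrite inE mdet_mul nzsqM ?PSL_det //.
by move: gP hP; rewrite !inE => -> ->.
Qed.

Lemma orb_g g : g \in PSL2 F -> [set mobius g @: X | X : {set option F} in O] = O.
Proof.
move=> gP; apply/eqP; rewrite eqEcard; apply/andP; split.
  apply/subsetP => Y /imsetP [X /imsetP [h hP ->] ->].
  apply/imsetP; exists (mmul g h); first exact: PSL_mul.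
  rewrite -imset_comp; apply: eq_imset => x /=.
  by rewrite mobius_comp // PSL_det.
have gi : injective (fun A : {set option F} => mobius g @: A).
  apply: imset_inj; exact: mobius_inj (PSL_det gP).
by rewrite (card_imset _ gi).
Qed.

Lemma inT_g g p (X : {set option F}) : g \in PSL2 F -> inT (gmap g p) (mobius g @: X) = inT p X.
Proof.
move=> gP; have gi := mobius_inj (PSL_det gP).
by case: p => [[a b] c] /=; rewrite !mem_imset.
Qed.

Lemma Lam_g g p : g \in PSL2 F -> Lam (gmap g p) = Lam p.
Proof.
move=> gP; rewrite /Lam.
have gi : injective (fun A : {set option F} => mobius g @: A).
  apply: imset_inj; exact: mobius_inj (PSL_det gP).
rewrite -[RHS](card_imset _ gi); apply: eq_card => Y; apply/idP/idP.
  rewrite inE => /andP [YO iY]; rewrite -(orb_g gP) in YO; case/imsetP: YO => X XO YE.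
  subst Y; apply/imsetP; exists X => //; rewrite inE; apply/andP; split => //.
  by rewrite -(inT_g _ _ gP).
case/imsetP => X XD ->; rewrite inE in XD; case/andP: XD => XO iX.
rewrite inE inT_g // iX andbT -(orb_g gP); exact: imset_f.
Qed.

Lemma gmap_inj g : g \in PSL2 F -> injective (gmap g).
Proof.
move=> gP; have gi := mobius_inj (PSL_det gP).
by case=> [[a b] c] [[a' b'] c'] /= [/gi -> /gi -> /gi ->].
Qed.

Lemma Sset_g g b p : g \in PSL2 F -> (gmap g p \in Sset b) = (p \in Sset b).
Proof.
move=> gP; rewrite !inE distinct_g ?PSL_det //.
case dp: (distinct p) => //=; rewrite tau_g ?PSL_det //.
have gS : nzsq (mdet g) by move: gP; rewrite inE.
by rewrite gS; case: (tau p).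
Qed.

Lemma mcount_g g b (X : {set option F}) : g \in PSL2 F -> mcount b (mobius g @: X) = mcount b X.
Proof.
move=> gP; rewrite /mcount -[RHS](card_imset _ (gmap_inj gP)); apply: eq_card => p.
apply/idP/idP.
  move=> H; rewrite inE in H; case/andP: H => pS iX.
  move: p pS iX => [[a b0] c] pS /and3P [].
  case/imsetP => a1 a1X Ea; case/imsetP => b1 b1X Eb; case/imsetP => c1 c1X Ec.
  subst a b0 c; apply/imsetP; exists (a1, b1, c1) => //.
  rewrite inE /= a1X b1X c1X andbT -(Sset_g _ _ gP); by rewrite andbT.
case/imsetP => p' H ->; rewrite inE in H; case/andP: H => pS iX.
by rewrite inE Sset_g // pS inT_g.
Qed.

Let sigma : F * F * F * F := (n0, 0, 0, 1).
Lemma sigma_det : mdet sigma = n0.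
Proof. by rewrite /= mulr1 mulr0 subr0. Qed.
Lemma sigma_nz : mdet sigma != 0.
Proof. by rewrite sigma_det. Qed.

Lemma Sset_sigma b p : p \in Sset b -> gmap sigma p \in Sset (~~ b).
Proof.
rewrite !inE => /andP [dp /eqP tp]; rewrite distinct_g ?sigma_nz // dp /=.
by rewrite tau_g ?sigma_nz // sigma_det (negbTE n0ns) tp; case: b {tp}.
Qed.

Lemma gmap_sigma_inj : injective (gmap sigma).
Proof.
have gi := mobius_inj sigma_nz.
by case=> [[a b] c] [[a' b'] c'] /= [/gi -> /gi -> /gi ->].
Qed.

Lemma Sset_card : #|Sset true| = #|Sset false|.
Proof.
have H b : (#|Sset b| <= #|Sset (~~ b)|)%N.
  rewrite -(card_imset _ gmap_sigma_inj); apply: subset_leq_card.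
  apply/subsetP => p /imsetP [p' p'S ->]; exact: Sset_sigma.
by apply/eqP; rewrite eqn_leq (H true) (H false).
Qed.

Lemma card_sum (T : finType) (A : {set T}) (P : pred T) :
  #|[set x in A | P x]| = (\sum_(x in A) (P x : nat))%N.
Proof.
rewrite -sum1_card [in RHS]big_mkcond [in LHS]big_mkcond /=.
by apply: eq_bigr => x _; rewrite inE; case: (x \in A); case: (P x).
Qed.

Lemma double_count b : (\sum_(p in Sset b) Lam p = #|O| * mcount b B)%N.
Proof.
rewrite /Lam; under eq_bigr => p _ do rewrite card_sum.
rewrite exchange_big /= -sum_nat_const; apply: eq_bigr => X /imsetP [g gP ->].
by rewrite -card_sum -/(mcount b _) mcount_g.
Qed.

Definition pb (b : bool) : option F * option F * option F :=
  if b then (None, Some 0, Some 1) else gmap sigma (None, Some 0, Some 1).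

Lemma pb_S b : pb b \in Sset b.
Proof.
have H : pb true \in Sset true.
  rewrite inE /= andbT; apply/andP; split.
    by apply/eqP => -[] /eqP; rewrite eq_sym one0.
  rewrite eqb_id /tau.
  have -> : Delta (None, Some (0 : F), Some 1) = 1 ^+ 2 by rewrite /Delta /DD /=; ring.
  exact: nzsq_sqr (oner_neq0 F).
by case: b => //; exact: Sset_sigma H.
Qed.

Lemma Lam_const p : distinct p -> Lam p = Lam (pb (tau p)).
Proof.
move=> dp; have := pb_S (tau p); rewrite inE => /andP [dpb /eqP tpb].
have [g gP E] := trans3 nzsqM dpb dp tpb.
by rewrite -[in LHS]E Lam_g.
Qed.

Lemma Lam_pb b : (#|Sset b| * Lam (pb b) = #|O| * mcount b B)%N.
Proof.
rewrite -double_count -sum_nat_const; apply: eq_bigr => p.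
by rewrite inE => /andP [dp /eqP tp]; rewrite [RHS]Lam_const // tp.
Qed.

Lemma O_pos : (0 < #|O|)%N.
Proof.
apply/card_gt0P; exists B; apply/imsetP; exists (1, 0, 0, 1).
  by rewrite inE /= mulr1 mulr0 subr0; move: (nzsq_sqr (oner_neq0 F)); rewrite expr1n.
rewrite -[LHS]imset_id; apply: eq_imset => x; by rewrite mobius_scal ?oner_eq0.
Qed.

Definition triS p : {set option F} := let: (a, b, c) := p in a |: (b |: [set c]).

Lemma card_triS p : distinct p -> #|triS p| = 3%N.
Proof.
case: p => [[a b] c] /and3P [ab bc ac] /=.
rewrite !cardsU1 cards1 !inE negb_or ab ac bc.
done.
Qed.

Lemma sub_triS p (X : {set option F}) : (triS p \subset X) = inT p X.
Proof. by case: p => [[a b] c] /=; rewrite !subUset !sub1set andbA. Qed.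

Lemma card3_ex (T : {set option F}) : #|T| = 3%N -> exists p, distinct p /\ T = triS p.
Proof.
move=> T3; have := enum_uniq (mem T); rewrite cardE in T3.
case Es: (enum T) T3 => [|a [|b [|c [|d s]]]] //= _.
rewrite !inE !negb_or andbT => /andP [/andP [ab ac] bc].
exists (a, b, c); split; first by rewrite /= ab bc ac.
by apply/setP => x; rewrite -mem_enum Es !inE.
Qed.

Lemma Lam_tri p : Lam p = #|[set X in O | triS p \subset X]|.
Proof. by apply: eq_card => X; rewrite !inE sub_triS. Qed.

Lemma criterion : (exists p, distinct p && inT p B) ->
  (starter3 B <-> mcount true B = mcount false B).
Proof.
move=> [p0 /andP [dp0 ip0]].
have C0 : (0 < #|Sset true|)%N by apply/card_gt0P; exists (pb true); exact: pb_S.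
have dpb b : distinct (pb b) by have := pb_S b; rewrite inE => /andP [].
split.
  case=> lam [_ H]; have L p : distinct p -> Lam p = lam.
    by move=> dp; rewrite Lam_tri; apply: H; exact: card_triS.
  apply/eqP; rewrite -(eqn_pmul2l O_pos) -!Lam_pb -Sset_card !L //.
move=> Em.
have Lb b : Lam (pb b) = Lam (pb true).
  apply/eqP; rewrite -(eqn_pmul2l C0); apply/eqP.
  case: b => //; rewrite Sset_card Lam_pb -Em -Lam_pb Sset_card //.
exists (Lam (pb true)); split.
  have mpos : (0 < mcount (tau p0) B)%N.
    by apply/card_gt0P; exists p0; rewrite !inE dp0 eqxx ip0.
  have mt : (0 < mcount true B)%N by case: (tau p0) mpos; rewrite // Em.
  have := Lam_pb true; move: (O_pos) => Op E.
  have : (0 < #|Sset true| * Lam (pb true))%N by rewrite E muln_gt0 Op mt.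
  by rewrite muln_gt0 => /andP [].
move=> T /card3_ex [p [dp ->]].
by rewrite -Lam_tri Lam_const // Lb.
Qed.

End Orb.

Section Main.
Variable F : finFieldType.
Variable alpha : F.
Hypothesis Hq : (#|F| %% 52 = 1)%N.
Hypothesis Ha : (#|F|.-1).-primitive_root alpha.

Local Notation q1 := (#|F|.-1).

Lemma q1_gt0 : (0 < q1)%N.
Proof. exact: prim_order_gt0 Ha. Qed.

Definition mm := (q1 %/ 52)%N.

Lemma q1m : q1 = (4 * mm * 13)%N.
Proof.
have h1 := q1_gt0.
have h2 : #|F| = q1.+1 by rewrite prednK //; lia.
rewrite /mm; lia.
Qed.

Lemma mm_gt0 : (0 < mm)%N.
Proof. have := q1_gt0; rewrite q1m; lia. Qed.

Lemma unit_pow (x : F) : x != 0 -> x ^+ q1 = 1.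
Proof.
move=> x0; apply: (mulfI x0); rewrite mulr1 -exprS prednK ?expf_card //.
have := q1_gt0; lia.
Qed.

Lemma alpha_nz : alpha != 0.
Proof.
apply/eqP => a0; have := prim_expr_order Ha; rewrite a0 expr0n.
have -> : (q1 == 0)%N = false by have := q1_gt0; lia.
by move=> H; move: (oner_neq0 F); rewrite -H eqxx.
Qed.

Lemma log_ex (x : F) : x != 0 -> exists i, x = alpha ^+ i.
Proof. by move=> x0; case: (prim_rootP Ha (unit_pow x0)) => i ->; exists i. Qed.

Lemma q1_even : odd q1 = false.
Proof. by rewrite q1m !oddM. Qed.

Lemma nzsq_exp i : nzsq (alpha ^+ i) = ~~ odd i.
Proof.
have a0 := alpha_nz.
apply/idP/idP.
  case/andP => _ /existsP [y /eqP Ey].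
  have y0 : y != 0 by apply: (contraTneq _ (expf_neq0 i a0)) => y0; rewrite -Ey y0 exprS mul0r eqxx.
  case: (log_ex y0) => j Ej; move: Ey; rewrite Ej -exprM => /eqP.
  rewrite (eq_prim_root_expr Ha) => /eqP Em.
  by rewrite -(odd_mod i q1_even) -Em (odd_mod _ q1_even) oddM andbF.
move=> ev; rewrite /nzsq expf_neq0 //=; apply/existsP; exists (alpha ^+ i./2).
rewrite -exprM; apply/eqP; congr (_ ^+ _).
by rewrite muln2 -{2}(odd_double_half i) (negbTE ev).
Qed.

Lemma nzsqM (x y : F) : x != 0 -> y != 0 -> nzsq (x * y) = (nzsq x == nzsq y).
Proof.
move=> x0 y0; case: (log_ex x0) => i ->; case: (log_ex y0) => j ->.
by rewrite -exprD !nzsq_exp oddD; case: (odd i); case: (odd j).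
Qed.

Lemma alpha_ns : ~~ nzsq alpha.
Proof. by rewrite -(expr1 alpha) nzsq_exp. Qed.

Lemma a26_neq1 : alpha ^+ (26 * mm) != 1.
Proof.
have m0 := mm_gt0.
rewrite -(expr0 alpha) (eq_prim_root_expr Ha) q1m mod0n modn_small; lia.
Qed.

Lemma a26 : alpha ^+ (26 * mm) = -1.
Proof.
have : (alpha ^+ (26 * mm)) ^+ 2 == 1.
  by rewrite -exprM -(prim_expr_order Ha) q1m; apply/eqP; congr (_ ^+ _); lia.
by rewrite sqrf_eq1 (negbTE a26_neq1) => /eqP.
Qed.

Lemma nzsq_m1 : nzsq (-1 : F).
Proof. by rewrite -a26 nzsq_exp oddM. Qed.

Lemma m1_neq1 : (-1 : F) != 1.
Proof. by rewrite -a26 a26_neq1. Qed.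

Lemma two_nz : (1 + 1 : F) != 0.
Proof. by rewrite addr_eq0 eq_sym m1_neq1. Qed.

Definition beta := alpha ^+ (q1 %/ 13).

Lemma q13 : (q1 %/ 13 = 4 * mm)%N.
Proof. by rewrite q1m mulnK. Qed.

Lemma beta_prim : 13.-primitive_root beta.
Proof.
have := exp_prim_root Ha (4 * mm); rewrite /beta q13 {1 2}q1m gcdnMr mulKn //.
by rewrite muln_gt0 mm_gt0.
Qed.

Lemma beta13 : beta ^+ 13 = 1.
Proof. exact: prim_expr_order beta_prim. Qed.

Definition yv (i : nat) : F := (-1) ^+ (i %/ 13) * beta ^+ (i %% 13).

Lemma yv_alpha i : yv i = alpha ^+ (26 * mm * (i %/ 13) + 4 * mm * (i %% 13)).
Proof. by rewrite /yv /beta q13 exprD (exprM alpha (26 * mm)) a26 (exprM alpha (4 * mm)). Qed.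

Lemma yv_nz i : yv i != 0.
Proof. by rewrite yv_alpha expf_neq0 // alpha_nz. Qed.

Lemma nzsq_yv i : nzsq (yv i).
Proof. by rewrite yv_alpha nzsq_exp oddD !oddM. Qed.

Lemma yv13 i : yv i ^+ 13 = (-1) ^+ (i %/ 13).
Proof.
rewrite /yv exprMn -[(beta ^+ _) ^+ 13]exprM mulnC exprM beta13 expr1n mulr1.
by rewrite -exprM -(signr_odd _ (_ * 13)) oddM andbT signr_odd.
Qed.

Lemma yv_inj n (i j : 'I_n) : (n <= 26)%N -> yv i = yv j -> i = j.
Proof.
move=> n26 E; have Hi := ltn_ord i; have Hj := ltn_ord j.
have Ee : (i %/ 13 = j %/ 13)%N.
  have := yv13 i; rewrite E yv13.
  have [->|->] : (j %/ 13 = 0 \/ j %/ 13 = 1)%N by lia.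
    have [->|->] : (i %/ 13 = 0 \/ i %/ 13 = 1)%N by lia.
      by [].
    by rewrite expr0 expr1 => /esym /eqP; rewrite (negbTE m1_neq1).
  have [->|->] : (i %/ 13 = 0 \/ i %/ 13 = 1)%N by lia.
    by rewrite expr0 expr1 => /eqP; rewrite (negbTE m1_neq1).
  by [].
move: E; rewrite /yv Ee => /mulfI E.
have /E /eqP : (-1 : F) ^+ (j %/ 13) != 0 by rewrite expf_neq0 // oppr_eq0 oner_eq0.
rewrite (eq_prim_root_expr beta_prim) !modn_mod => /eqP Er.
apply/val_inj => /=; lia.
Qed.

Lemma yv_small r : (r < 13)%N -> yv r = beta ^+ r.
Proof. by move=> r13; rewrite /yv divn_small // modn_small // expr0 mul1r. Qed.

Lemma yv_big r : (r < 13)%N -> yv (13 + r) = - beta ^+ r.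
Proof.
move=> r13; rewrite /yv.
have -> : ((13 + r) %/ 13 = 1)%N by lia.
have -> : ((13 + r) %% 13 = r)%N by lia.
by rewrite expr1 mulN1r.
Qed.

Lemma root13 x : x ^+ 13 = 1 -> exists2 r, (r < 13)%N & x = yv r.
Proof.
move=> xn; case: (prim_rootP beta_prim xn) => r ->.
by exists r => //; rewrite yv_small.
Qed.

Lemma root13m x : x ^+ 13 = -1 -> exists2 r, (r < 13)%N & x = yv (13 + r).
Proof.
move=> xn; have : (- x) ^+ 13 = 1.
  by rewrite exprNn xn -signr_odd /= expr1 mulN1r opprK.
case/(prim_rootP beta_prim) => r Er.
by exists r => //; rewrite yv_big // -Er opprK.
Qed.

Lemma mu13 : mu_sub F 13 = [set Some (yv i) | i : 'I_13].
Proof.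
apply/setP => p; apply/imsetP/imsetP => [[x xin ->]|[i _ ->]].
  rewrite inE in xin; case/andP: xin => x0 /eqP xn.
  case: (root13 xn) => r r13 ->.
  by exists (Ordinal r13).
exists (yv i) => //; rewrite inE yv_nz /= yv13 divn_small //.
Qed.

Lemma mu26 : mu_sub F 26 = [set Some (yv i) | i : 'I_26].
Proof.
apply/setP => p; apply/imsetP/imsetP => [[x xin ->]|[i _ ->]].
  rewrite inE in xin; case/andP: xin => x0 /eqP xn.
  have : (x ^+ 13) ^+ 2 == 1 by rewrite -exprM xn.
  rewrite sqrf_eq1 => /orP [] /eqP H.
    case: (root13 H) => r r13 ->.
    have r26 : (r < 26)%N by lia.
    by exists (Ordinal r26).
  case: (root13m H) => r r13 ->.
  have r26 : (13 + r < 26)%N by lia.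
  by exists (Ordinal r26).
exists (yv i) => //; rewrite inE yv_nz /=.
have -> : yv i ^+ 26 = (yv i ^+ 13) ^+ 2 by rewrite -exprM.
rewrite yv13.
by rewrite -exprM mulnC exprM sqrrN !expr1n.
Qed.

Definition bs : seq bool := [seq nzsq (1 - beta ^+ j) | j <- iota 1 6].
Definition c2 : bool := nzsq (1 + 1 : F).

Lemma one_sub_nz k : (0 < k < 13)%N -> 1 - beta ^+ k != 0.
Proof.
move=> k13; rewrite subr_eq0 eq_sym -(expr0 beta) (eq_prim_root_expr beta_prim) mod0n.
rewrite modn_small; lia.
Qed.

Lemma one_add_nz k : 1 + beta ^+ k != 0.
Proof.
rewrite addr_eq0; apply/eqP => E0.
have E : beta ^+ k = -1 by rewrite E0 opprK.
have : (beta ^+ k) ^+ 13 = (-1) ^+ 13 by rewrite E.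
rewrite -exprM mulnC exprM beta13 expr1n -signr_odd /= expr1 => /eqP.
by rewrite eq_sym (negbTE m1_neq1).
Qed.

Lemma Sg_ok d : (0 < d < 13)%N -> nzsq (1 - beta ^+ d) = Sg bs d.
Proof.
move=> d13; rewrite /Sg /bs; case: ifP => d6.
  rewrite (nth_map 0%N) ?size_iota; last lia.
  rewrite nth_iota; last lia.
  by congr nzsq; congr (1 - beta ^+ _); lia.
rewrite (nth_map 0%N) ?size_iota; last lia.
rewrite nth_iota; last lia.
have h : beta ^+ d * beta ^+ (13 - d) = 1 by rewrite -exprD subnKC ?beta13 //; lia.
have E : 1 - beta ^+ d = (- beta ^+ d) * (1 - beta ^+ (13 - d)).
  by rewrite mulrBr mulr1 mulNr h; ring.
have -> : (1 + (13 - d).-1 = 13 - d)%N by lia.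
rewrite E nzsqM; last by apply: one_sub_nz; lia.
  by rewrite -yv_big ?nzsq_yv //; lia.
by rewrite oppr_eq0 expf_neq0 // -(expr1 beta) -yv_small // yv_nz.
Qed.

Lemma PAT_ok e d : (d < 13)%N -> (odd e || (0 < d)%N) ->
  nzsq (1 - (-1) ^+ e * beta ^+ d) = PAT bs c2 e d.
Proof.
move=> d13; rewrite /PAT -signr_odd; case: (odd e) => /= H.
  rewrite expr1 mulN1r opprK.
  case: eqP => [->|d0]; first by rewrite expr0.
  have E : 1 - beta ^+ (2 * d) = (1 - beta ^+ d) * (1 + beta ^+ d).
    by rewrite mulnC exprM; ring.
  have := congr1 (@nzsq F) E; rewrite nzsqM ?one_add_nz ?one_sub_nz //; last lia.
  rewrite -(prim_expr_mod beta_prim) (Sg_ok (d:=d)); last lia.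
  rewrite Sg_ok; last lia.
  by case: (nzsq _); case: (Sg bs _); case: (Sg bs _).
by rewrite expr0 mul1r Sg_ok //; lia.
Qed.

Lemma yv_inj_nat a b : (a < 26)%N -> (b < 26)%N -> yv a = yv b -> a = b.
Proof. by move=> ha hb E; have := @yv_inj 26 (Ordinal ha) (Ordinal hb) (leqnn _) E => -[]. Qed.

Lemma sgn_ok i j : (i < 26)%N -> (j < 26)%N -> i != j ->
  nzsq (yv i - yv j) = sgnI bs c2 i j.
Proof.
move=> hi hj ij; rewrite /sgnI.
set d := ((j %% 13 + 13 - i %% 13) %% 13)%N.
have E1 : (-1 : F) ^+ (i %/ 13) * (-1) ^+ (i %/ 13 + j %/ 13) = (-1) ^+ (j %/ 13).
  by rewrite -exprD -[LHS]signr_odd -[RHS]signr_odd oddD oddD addKb.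
have E2 : beta ^+ (i %% 13) * beta ^+ d = beta ^+ (j %% 13).
  rewrite -exprD -(prim_expr_mod beta_prim) -[in RHS](prim_expr_mod beta_prim).
  congr (_ ^+ _); rewrite /d; lia.
have Ey : yv j = yv i * ((-1) ^+ (i %/ 13 + j %/ 13) * beta ^+ d).
  by rewrite /yv mulrACA E1 E2.
rewrite Ey -{1}[yv i]mulr1 -mulrBr nzsqM ?yv_nz ?nzsq_yv /=.
  apply: PAT_ok; first by rewrite /d; apply: ltn_pmod.
  have [->|H] : (0 < d)%N \/ (i %/ 13 + j %/ 13 = 1)%N by rewrite /d; lia.
    by rewrite orbT.
  by rewrite H.
  by [].
rewrite subr_eq0 eq_sym; apply/eqP => E3.
have : yv i = yv j by rewrite Ey E3 mulr1.
move/(yv_inj_nat hi hj)/eqP; exact/negP.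
Qed.

Lemma tau_ok a b c : (a < 26)%N -> (b < 26)%N -> (c < 26)%N ->
  [&& a != b, b != c & a != c] ->
  tau (Some (yv a), Some (yv b), Some (yv c)) = tauI bs c2 a b c.
Proof.
move=> ha hb hc /and3P [ab bc ac].
have nz x y : (x < 26)%N -> (y < 26)%N -> x != y -> yv x - yv y != 0.
  move=> hx hy xy; rewrite subr_eq0; apply/eqP => /(yv_inj_nat hx hy) /eqP; exact/negP.
rewrite /tau /Delta /DD /= !mulr1 !mul1r -[yv c - yv a]opprB mulrN -mulN1r nzsqM ?oppr_eq0 ?oner_eq0 ?mulf_neq0 ?nz // 1?eq_sym // nzsq_m1 /=.
rewrite nzsqM ?mulf_neq0 ?nz // 1?eq_sym //.
rewrite nzsqM ?nz // 1?eq_sym //.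
rewrite /tauI !sgn_ok // 1?eq_sym //.
by case: (sgnI _ _ a b); case: (sgnI _ _ b c); case: (sgnI _ _ a c).
Qed.

Definition Qn (bb : bool) (a b c : nat) : bool :=
  [&& a != b, b != c, a != c & tauI bs c2 a b c == bb].

Lemma mcount_idx n bb : (n <= 26)%N ->
  mcount bb [set Some (yv i) | i : 'I_n] = #|[set t : 'I_n * 'I_n * 'I_n | Qn bb t.1.1 t.1.2 t.2]|.
Proof.
move=> n26.
have phi_inj : injective (fun i : 'I_n => Some (yv i)) by move=> i j [] /(yv_inj n26).
pose phi3 := fun t : 'I_n * 'I_n * 'I_n => (Some (yv t.1.1), Some (yv t.1.2), Some (yv t.2)).
have phi3_inj : injective phi3.
  by case=> [[a b] c] [[a' b'] c'] [] /(yv_inj n26) -> /(yv_inj n26) -> /(yv_inj n26) ->.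
have lt (i : 'I_n) : (i < 26)%N by apply: leq_trans (ltn_ord i) n26.
have key (a b c : 'I_n) : ((Some (yv a), Some (yv b), Some (yv c)) \in Sset F bb) = Qn bb a b c.
  rewrite inE /= !(inj_eq phi_inj) /Qn.
  case D: [&& a != b, b != c & a != c] => /=.
    by rewrite tau_ok ?lt //; move/and3P: D => [-> -> ->].
  by move: D; case: (a != b); case: (b != c); case: (a != c).
rewrite /mcount -[RHS](card_imset _ phi3_inj); apply: eq_card => p; apply/idP/idP.
  move=> H; rewrite inE in H; case/andP: H => pS iX.
  move: p pS iX => [[x y] z] pS /and3P [].
  case/imsetP => a _ Ea; case/imsetP => b _ Eb; case/imsetP => c _ Ec; subst x y z.
  by apply/imsetP; exists (a, b, c) => //; rewrite inE /= -key.
case/imsetP => [[[a b] c]] H ->; rewrite inE /= in H.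
rewrite inE /phi3 /= key H /=.
by apply/and3P; split; apply: imset_f.
Qed.

Lemma sumI_foldr (f : nat -> nat) (s : seq nat) :
  (\sum_(i <- s) f i)%N = foldr (fun i acc => f i + acc)%N 0%N s.
Proof. by elim: s => [|x s IH]; rewrite ?big_nil ?big_cons ?IH. Qed.

Lemma sum_ordI n (f : nat -> nat) : (\sum_(i < n) f i)%N = sumI n f.
Proof. by rewrite -(big_mkord xpredT) /index_iota subn0 sumI_foldr. Qed.

Lemma card3_sum n (Q : nat -> nat -> nat -> bool) :
  #|[set t : 'I_n * 'I_n * 'I_n | Q t.1.1 t.1.2 t.2]| =
  sumI n (fun a => sumI n (fun b => sumI n (fun c => Q a b c))).
Proof.
rewrite -sum1_card big_mkcond /=.
transitivity (\sum_(a < n) \sum_(b < n) \sum_(c < n) (Q a b c : nat))%N.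
  rewrite pair_bigA pair_bigA /=; apply: eq_bigr => t _; rewrite inE.
  by case: (Q _ _ _).
rewrite -sum_ordI; apply: eq_bigr => a _; rewrite -sum_ordI.
by apply: eq_bigr => b _; rewrite -sum_ordI.
Qed.

Definition cntQ n bb := sumI n (fun a => sumI n (fun b => sumI n (fun c => Qn bb a b c : nat))).

Lemma sumI_ext n f g : (forall i, (i < n)%N -> f i = g i) -> sumI n f = sumI n g.
Proof.
rewrite /sumI => H; have : forall i, i \in iota 0 n -> f i = g i.
  by move=> i; rewrite mem_iota add0n => /andP [_ /H].
elim: (iota 0 n) => [|x t IH] //= H'.
by rewrite H' ?mem_head // IH // => i it; apply: H'; rewrite inE it orbT.
Qed.

Lemma sumI_add n f g : (sumI n f + sumI n g)%N = sumI n (fun i => f i + g i)%N.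
Proof. by rewrite /sumI; elim: (iota 0 n) => [|x t IH] //=; rewrite -IH; lia. Qed.

Lemma cntQ_sum n : (cntQ n true + cntQ n false)%N = cntD n.
Proof.
rewrite /cntQ /cntD sumI_add; apply: sumI_ext => a _.
rewrite sumI_add; apply: sumI_ext => b _.
rewrite sumI_add; apply: sumI_ext => c _.
rewrite /Qn; case: (a != b); case: (b != c); case: (a != c) => //=.
by case: (tauI _ _ _ _ _).
Qed.

Lemma cntT_eq n : cntT n bs c2 = cntQ n true.
Proof.
rewrite /cntT /tbl cnt3_mkseq /cntQ.
apply: sumL_ext => a _; apply: sumL_ext => b _; apply: sumL_ext => c _.
rewrite /Qn /tauI eqb_id.
by case: (a == b); case: (b == c); case: (a == c).
Qed.

Lemma design_iff n : (2 < n <= 26)%N -> mu_sub F n = [set Some (yv i) | i : 'I_n] ->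
  (gives_3design F n <-> (2 * cntT n bs c2 = cntD n)%N).
Proof.
move=> /andP [n2 n26] E; rewrite /gives_3design E (criterion nzsqM alpha_nz alpha_ns).
  rewrite !mcount_idx // !card3_sum -/(cntQ n true) -/(cntQ n false) -cntQ_sum cntT_eq.
  by split => H; lia.
have h0 : (0 < n)%N by lia.
have h1 : (1 < n)%N by lia.
exists (Some (yv (Ordinal h0)), Some (yv (Ordinal h1)), Some (yv (Ordinal n2))).
apply/andP; split; last by apply/and3P; split; apply: imset_f.
have ne x y : (x < 26)%N -> (y < 26)%N -> x != y -> Some (yv x) != Some (yv y).
  move=> hx hy xy; apply/eqP => -[] /(yv_inj_nat hx hy) /eqP; exact/negP.
by rewrite /= !ne //; lia.
Qed.

End Main.

Definition tosgn (b : bool) : int := if b then 1 else -1.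

Lemma tosgn_inj : injective tosgn.
Proof. by case; case => // /eqP. Qed.

Theorem theorem5p1 (F : finFieldType) (alpha : F) :
  (#|F| %% 52 = 1)%N ->
  (#|F|.-1).-primitive_root alpha ->
  let beta := alpha ^+ (#|F|.-1 %/ 13) in
  let s := [seq chi (1 - beta ^+ j) | j <- iota 1 6] in
  (gives_3design F 13 <-> gives_3design F 26) /\
  (gives_3design F 26 <->
     s \in [:: [:: 1; 1; -1; 1; -1; -1]; [:: -1; -1; 1; -1; 1; 1];
               [:: 1; 1; -1; -1; -1; 1]; [:: -1; -1; 1; 1; 1; -1];
               [:: 1; -1; 1; 1; -1; -1]; [:: -1; 1; -1; -1; 1; 1];
               [:: 1; -1; 1; -1; -1; 1]; [:: -1; 1; -1; 1; 1; -1]]).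
Proof.
move=> Hq Ha beta s.
have Es : s = map tosgn (bs alpha) by rewrite /bs -map_comp.
have EL : [:: [:: 1; 1; -1; 1; -1; -1]; [:: -1; -1; 1; -1; 1; 1];
               [:: 1; 1; -1; -1; -1; 1]; [:: -1; -1; 1; 1; 1; -1];
               [:: 1; -1; 1; 1; -1; -1]; [:: -1; 1; -1; -1; 1; 1];
               [:: 1; -1; 1; -1; -1; 1]; [:: -1; 1; -1; 1; 1; -1]] = map (map tosgn) LIST by [].
rewrite Es EL (mem_map (inj_map tosgn_inj)).
rewrite (design_iff Hq Ha (n := 13)) //; last exact: mu13.
rewrite (design_iff Hq Ha (n := 26)) //; last exact: mu26.
have P := check (nzsq (1 - beta ^+ 1)) (nzsq (1 - beta ^+ 2)) (nzsq (1 - beta ^+ 3))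
  (nzsq (1 - beta ^+ 4)) (nzsq (1 - beta ^+ 5)) (nzsq (1 - beta ^+ 6)) (c2 F).
change (is_true (Pchk (bs alpha) (c2 F))) in P.
move: P; rewrite /Pchk cntD13 cntD26 => /andP [/eqP H1 /eqP H2].
split; split.
- by move=> /eqP H; apply/eqP; rewrite -H1 H.
- by move=> /eqP H; apply/eqP; rewrite H1 H.
- by move=> /eqP H; rewrite -H2 H.
- by move=> H; apply/eqP; rewrite H2 H.
Qed.
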